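(* Let $S,T\subseteq[r]$. If $S$ dominates $T$, then $T\subseteq S$.
   Context: For $\pi=a_1\cdots a_{r+1}\in S_{r+1}$, its descent set is $\{i\in[r]:a_i>a_{i+1}\}$, and $D(S)$ is the set of permutations in $S_{r+1}$ with descent set $S$. The inversion set is $I(\pi)=\{(a_i,a_j):i<j,\ a_i>a_j\}$; $\pi\le_w\pi'$ iff $I(\pi)\subseteq I(\pi')$ (weak Bruhat order). $S$ dominates $T$ if there is an injection $\phi:D(T)\to D(S)$ with $\pi\le_w\phi(\pi)$ for all $\pi\in D(T)$. *)

(* Defs.v *)
From mathcomp Require Import all_boot all_fingroup.
Set Implicit Arguments. Unset Strict Implicit. Unset Printing Implicit Defensive.

(* Permutations of [r+1] are 'S_(r.+1) (acting on 'I_(r.+1) = {0,...,r}).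
   A permutation s is the word a_1 ... a_{r+1} with a_k = s (k-1).
   Positions of [r] = {1,...,r} are encoded by i : 'I_r, i standing for i+1. *)

Definition posL r (i : 'I_r) : 'I_r.+1 := widen_ord (leqnSn r) i.
Definition posR r (i : 'I_r) : 'I_r.+1 := lift ord0 i.

Definition descent_set r (s : 'S_r.+1) : {set 'I_r} :=
  [set i : 'I_r | s (posR i) < s (posL i)].

Definition Dset r (S : {set 'I_r}) : {set 'S_r.+1} :=
  [set s : 'S_r.+1 | descent_set s == S].

Definition inv_set n (s : 'S_n) : {set 'I_n * 'I_n} :=
  [set x : 'I_n * 'I_n |
     [exists i : 'I_n, exists j : 'I_n,
        [&& i < j, s j < s i & x == (s i, s j)]]].

Definition weak_le n (s t : 'S_n) : bool := inv_set s \subset inv_set t.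

Definition dominates r (S T : {set 'I_r}) : Prop :=
  exists phi : 'S_r.+1 -> 'S_r.+1,
    [/\ {in Dset T &, injective phi},
        {in Dset T, forall pi, phi pi \in Dset S} &
        {in Dset T, forall pi, weak_le pi (phi pi)}].

(* Main.v *)
Require Import Defs.
From mathcomp Require Import all_boot all_fingroup.
From mathcomp Require Import zify.

Set Implicit Arguments. Unset Strict Implicit. Unset Printing Implicit Defensive.

Section W.
Variables (r : nat) (T : {set 'I_r}).

Definition eb (p : nat) : nat :=
  \big[minn/r]_(j : 'I_r | (j \in T) && (p <= j)) (j : nat).
Definition sb (p : nat) : nat :=
  \max_(j : 'I_r | (j \in T) && (j < p)) j.+1.
Definition wval (p : nat) : nat := r - eb p + (p - sb p).

Lemma eb_ge p : p <= r -> p <= eb p.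
Proof.
move=> hp; rewrite /eb; apply: (big_ind (fun x => p <= x)) => //.
  by move=> x y hx hy; rewrite leq_min hx hy.
by move=> j /andP[].
Qed.

Lemma eb_le_r p : eb p <= r.
Proof.
rewrite /eb; apply: (big_ind (fun x => x <= r)) => //.
  by move=> x y hx hy; rewrite geq_min hx.
by move=> j _; apply: ltnW.
Qed.

Lemma eb_le p (j : 'I_r) : j \in T -> p <= j -> eb p <= j.
Proof.
move=> hj hpj; rewrite /eb.
have : j \in index_enum 'I_r by rewrite mem_index_enum.
elim: (index_enum 'I_r) => // a s IH; rewrite inE big_cons => /orP[/eqP <-|hs].
  by rewrite hj hpj /= geq_minl.
case: ifP => _; last exact: IH.
by rewrite geq_min IH ?orbT.
Qed.

Lemma sb_le p : sb p <= p.
Proof.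
rewrite /sb; apply: (big_ind (fun x => x <= p)) => //.
  by move=> x y hx hy; rewrite geq_max hx hy.
by move=> j /andP[].
Qed.

Lemma sb_ge p (j : 'I_r) : j \in T -> j < p -> j.+1 <= sb p.
Proof.
move=> hj hjp; rewrite /sb.
by apply: (@leq_bigmax_cond _ (fun j : 'I_r => (j \in T) && (j < p)) (fun j : 'I_r => j.+1) j); rewrite hj hjp.
Qed.

Lemma wval_diff p q (j : 'I_r) : p < q -> q <= r -> j \in T -> p <= j < q ->
  wval q < wval p.
Proof.
move=> hpq hq hj /andP[h1 h2].
have := eb_le hj h1; have := sb_ge hj h2; have := eb_ge hq;
have := eb_le_r q; have := sb_le p; have := ltn_ord j.
rewrite /wval; lia.
Qed.

Lemma wval_same p q : p <= q -> q <= r ->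
  (forall j : 'I_r, j \in T -> ~~ (p <= j < q)) -> wval p + (q - p) = wval q.
Proof.
move=> hpq hq hno.
have ee : eb p = eb q.
  rewrite /eb; apply: eq_bigl => j; case hj: (j \in T) => //=.
  have := hno j hj; lia.
have ss : sb p = sb q.
  rewrite /sb; apply: eq_bigl => j; case hj: (j \in T) => //=.
  have := hno j hj; lia.
have := sb_le p; have := eb_ge (leq_trans hpq hq); have := eb_le_r p.
rewrite /wval ee ss; lia.
Qed.

Lemma wval_bound p : p <= r -> wval p <= r.
Proof. move=> hp; have := eb_ge hp; have := eb_le_r p; rewrite /wval; lia. Qed.

Definition wfun (p : 'I_r.+1) : 'I_r.+1 := inord (wval p).

Lemma wfunE p : val (wfun p) = wval p.
Proof. by rewrite /= inordK // ltnS wval_bound // -ltnS. Qed.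

Lemma wval_neq p q : p < q -> q <= r -> wval p != wval q.
Proof.
move=> hpq hq.
case: (boolP [exists j : 'I_r, (j \in T) && (p <= j < q)]).
  move/existsP=> [j /andP[hj hb]].
  by have := wval_diff hpq hq hj hb; lia.
move=> hn.
have hno : forall j : 'I_r, j \in T -> ~~ (p <= j < q).
  move=> j hj; apply/negP => hb; move/negP: hn; apply; apply/existsP.
  by exists j; rewrite hj hb.
have := wval_same (ltnW hpq) hq hno; lia.
Qed.

Lemma wfun_inj : injective wfun.
Proof.
move=> p q e; apply/val_inj/eqP; move/(congr1 val): e; rewrite !wfunE.
have hp := ltn_ord p; have hq := ltn_ord q.
case: (ltngtP p q) => // h.
  by move=> e; have := wval_neq h (hq : q <= r); rewrite e eqxx.
by move=> e; have := wval_neq h (hp : p <= r); rewrite e eqxx.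
Qed.

Definition wperm : 'S_r.+1 := perm wfun_inj.

Lemma wperm_val p : val (wperm p) = wval p.
Proof. by rewrite /wperm permE wfunE. Qed.

Lemma wperm_D : wperm \in Dset T.
Proof.
rewrite inE; apply/eqP/setP => i; rewrite inE !wperm_val /=.
have hi := ltn_ord i.
case: (boolP (i \in T)) => hiT.
  by apply: (wval_diff (ltnSn i) hi hiT); rewrite leqnn ltnSn.
have hno : forall j : 'I_r, j \in T -> ~~ (i <= j < i.+1).
  move=> j hj; apply/negP => hb.
  have : j = i by apply: val_inj => /=; lia.
  by move=> e; move: hiT; rewrite -e hj.
rewrite /posR /= /bump /= add1n; apply/negbTE; rewrite -leqNgt.
have := wval_same (leqnSn i) hi hno; lia.
Qed.

Lemma wperm_prefix (t : 'I_r) (p q : 'I_r.+1) : t \in T -> p <= t -> t < q ->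
  wperm q < wperm p.
Proof.
move=> ht hp hq; rewrite !wperm_val.
apply: (wval_diff (j := t)) => //; first by lia.
  by rewrite -ltnS.
by rewrite hp.
Qed.

End W.
Local Open Scope group_scope.

Lemma inv_mem n (s : 'S_n) x y : (x, y) \in inv_set s -> s^-1 x < s^-1 y.
Proof.
rewrite inE => /existsP[i /existsP[j /and3P[hij _ /eqP[-> ->]]]].
by rewrite !permK.
Qed.

Lemma mem_inv n (s : 'S_n) (p q : 'I_n) : p < q -> s q < s p -> (s p, s q) \in inv_set s.
Proof.
move=> h1 h2; rewrite inE; apply/existsP; exists p; apply/existsP; exists q.
by rewrite h1 h2 eqxx.
Qed.

Theorem proposition5p4 (r : nat) (S T : {set 'I_r}) :
  dominates S T -> T \subset S.
Proof.
move=> [phi [_ hD hW]]; apply/subsetP => t ht.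
set pi := wperm T.
have piD : pi \in Dset T by exact: wperm_D.
set sg := phi pi.
have sD : sg \in Dset S by exact: hD.
have sW : weak_le pi sg by exact: hW.
move: sD; rewrite inE => /eqP <-; rewrite inE.
pose inX (v : 'I_r.+1) := pi^-1 v <= t.
have pre : forall x y, inX x -> ~~ inX y -> y < x.
  move=> x y hx hy.
  rewrite -(permKV pi x) -(permKV pi y).
  by apply: (wperm_prefix (t := t)) => //; rewrite ltnNge.
have ord : forall x y, inX x -> ~~ inX y -> sg^-1 x < sg^-1 y.
  move=> x y hx hy; apply: inv_mem.
  move/subsetP: sW; apply.
  rewrite -{1}(permKV pi x) -{1}(permKV pi y).
  apply: mem_inv; last by rewrite !permKV; exact: pre.
  by move: hy; rewrite /inX -ltnNge; apply: leq_ltn_trans.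
set P := [set p : 'I_r.+1 | p <= t].
have c1 : inX (sg (posL t)).
  apply/negPn/negP => hy.
  pose Q := [set p : 'I_r.+1 | p < t].
  have sub : [set sg^-1 (pi p) | p in P] \subset Q.
    apply/subsetP => z /imsetP[p hp ->]; rewrite inE.
    have := ord (pi p) _ _ hy; rewrite permK /posL /=; apply.
    by rewrite /inX permK; rewrite inE in hp.
  have := subset_leq_card sub.
  rewrite card_imset; last by move=> a b /perm_inj /perm_inj.
  have : Q \proper P.
    apply/properP; split.
      by apply/subsetP => z; rewrite !inE; apply: ltnW.
    by exists (posL t); rewrite !inE /= ?ltnn ?leqnn.
  by move/proper_card; rewrite ltnNge => /negP.
have c2 : ~~ inX (sg (posR t)).
  apply/negP => hx.
  pose P' := [set p : 'I_r.+1 | p <= t.+1].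
  have sub : [set pi^-1 (sg j) | j in P'] \subset P.
    apply/subsetP => z /imsetP[j hj ->]; rewrite inE.
    apply/negPn/negP => hy.
    have := ord _ _ hx hy; rewrite !permK /posR /= => h.
    by rewrite inE in hj; move: h; rewrite ltnNge hj.
  have := subset_leq_card sub.
  rewrite card_imset; last by move=> a b /perm_inj /perm_inj.
  have : P \proper P'.
    apply/properP; split.
      by apply/subsetP => z; rewrite !inE => h; apply: leq_trans h _.
    by exists (posR t); rewrite !inE /= ?ltnn ?leqnn.
  by move/proper_card; rewrite ltnNge => /negP.
exact: pre.
Qed.
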